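(* Let $X$ be a scalable monoid over a ring $R$. If $X$ is equipped with a dense closed set $U$ of unit elements, then $X$ is distributive: for all orbitoids $\mathsf{A},\mathsf{B}\in X/{\sim}$, all $x,y\in\mathsf{A}$ and all $z\in\mathsf{B}$, $(x+y)z=xz+yz$ and $z(x+y)=zx+zy$.
   Context: A scalable monoid over a (unital, associative) ring $R$ is a monoid $X$ (identity $1_X$, product written $xy$) together with a map $R\times X\to X$, $(\alpha,x)\mapsto\alpha\cdot x$, such that $1\cdot x=x$, $\alpha\cdot(\beta\cdot x)=\alpha\beta\cdot x$ and $\alpha\cdot(xy)=(\alpha\cdot x)y=x(\alpha\cdot y)$. On $X$, $x\sim y$ iff $\alpha\cdot x=\beta\cdot y$ for some $\alpha,\beta\in R$; its classes are orbitoids, $[x]$ is the orbitoid of $x$, and $X/{\sim}$ is the set of orbitoids. A unit element for an orbitoid $\mathsf{C}$ is some $u\in\mathsf{C}$ such that every $x\in\mathsf{C}$ equals $\lambda\cdot u$ for some $\lambda\in R$ and $\lambda\cdot u=\lambda'\cdot u$ implies $\lambda=\lambda'$; a unit element of $X$ means a unit element for its own orbitoid. A set $U\subseteq X$ is dense if for every $x\in X$ there is $u\in U$ with $u\sim x$, and closed if $u,v\in U$ implies $uv\in U$. For $x,y$ in an orbitoid with unit element $u$, $x=\rho\cdot u$, $y=\sigma\cdot u$, the sum is $x+y:=(\rho+\sigma)\cdot u$ (independent of the choice of $u$). *)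

(* Defs.v *)
From mathcomp Require Import all_boot all_algebra.
Set Implicit Arguments. Unset Strict Implicit. Unset Printing Implicit Defensive.
Import GRing.Theory.
Local Open Scope ring_scope.

Definition scalable_monoid (R : pzRingType) (X : Type)
  (mul : X -> X -> X) (one : X) (act : R -> X -> X) : Prop :=
  (forall x y z, mul x (mul y z) = mul (mul x y) z) /\
  (forall x, mul one x = x) /\
  (forall x, mul x one = x) /\
  (forall x, act 1 x = x) /\
  (forall a b x, act a (act b x) = act (a * b) x) /\
  (forall a x y, act a (mul x y) = mul (act a x) y) /\
  (forall a x y, act a (mul x y) = mul x (act a y)).

Definition sim (R : pzRingType) (X : Type) (act : R -> X -> X) (x y : X) : Prop :=
  exists a b : R, act a x = act b y.

Definition unit_element (R : pzRingType) (X : Type) (act : R -> X -> X) (u : X) : Prop :=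
  (forall x, sim act x u -> exists l : R, x = act l u)
  /\ (forall l l' : R, act l u = act l' u -> l = l').

Definition dense_set (R : pzRingType) (X : Type) (act : R -> X -> X) (U : X -> Prop) : Prop :=
  forall x, exists u, U u /\ sim act u x.

Definition closed_set (X : Type) (mul : X -> X -> X) (U : X -> Prop) : Prop :=
  forall u v, U u -> U v -> U (mul u v).

Definition is_sum (R : pzRingType) (X : Type) (act : R -> X -> X) (x y s : X) : Prop :=
  exists (u : X) (rho sigma : R),
    [/\ unit_element act u, x = act rho u, y = act sigma u & s = act (rho + sigma) u].

(* Main.v *)
Require Import Defs.
From mathcomp Require Import all_boot all_algebra.

Theorem proposition2p39 (R : pzRingType) (X : Type)
  (mul : X -> X -> X) (one : X) (act : R -> X -> X) (U : X -> Prop) :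
  scalable_monoid mul one act ->
  (forall u, U u -> unit_element act u) ->
  dense_set act U -> closed_set mul U ->
  forall x y z : X, sim act x y ->
    (exists s, is_sum act x y s) /\
    (forall s, is_sum act x y s ->
       is_sum act (mul x z) (mul y z) (mul s z) /\
       is_sum act (mul z x) (mul z y) (mul z s)).
Proof.
move=> [mA [m1l [m1r [a1 [aM [aL aR]]]]]] HU Hd Hc x y z [a [b Hab]].
have symm : forall p q, sim act p q -> sim act q p.
  by move=> p q [c [d H]]; exists d, c.
split.
  have [u [Uu [c [d Hcd]]]] := Hd x.
  have [Hu1 Hu2] := HU u Uu.
  have [rho Hrho] := Hu1 x (symm _ _ (ex_intro _ c (ex_intro _ d Hcd))).
  have [sig Hsig] : exists l, y = act l u.
    apply: Hu1; exists b, (a * rho)%R; by rewrite -Hab Hrho aM.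
  exists (act (rho + sig)%R u), u, rho, sig; split => //.
move=> s [v [rho [sig [Hv Hx Hy Hs]]]].
have [w [Uw Hwv]] := Hd v.
have [lam Hlam] := (HU w Uw).1 v (symm _ _ Hwv).
have [t [Ut Htz]] := Hd z.
have [kap Hkap] := (HU t Ut).1 z (symm _ _ Htz).
have e1 : forall r, mul (act r v) z = act (r * lam * kap)%R (mul w t).
  move=> r; rewrite Hlam Hkap aM -aL -aR aM //.
have e2 : forall r, mul z (act r v) = act (r * lam * kap)%R (mul t w).
  move=> r; rewrite Hlam Hkap aM -aR -aL aM //.
split.
  exists (mul w t), (rho * lam * kap)%R, (sig * lam * kap)%R; split.
  - exact: HU (Hc _ _ Uw Ut).
  - by rewrite Hx e1.
  - by rewrite Hy e1.
  - by rewrite Hs e1 !GRing.mulrDl.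
exists (mul t w), (rho * lam * kap)%R, (sig * lam * kap)%R; split.
- exact: HU (Hc _ _ Ut Uw).
- by rewrite Hx e2.
- by rewrite Hy e2.
- by rewrite Hs e2 !GRing.mulrDl.
Qed.
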